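(* In the algebra $\mathcal O_q$ defined in the context, for all $n\in\mathbb N$: $$\mathcal W_{n+1}=-(q-q^{-1})^{-1}\sum_{k=0}^n\sum_{\ell=0}^k\binom{k}{\ell}q^{k-2\ell}[2]_q^{-k-2}\tilde B_{(k-2\ell)\delta+\alpha_0}\mathcal G_{n-k},$$ $$\mathcal W_{-n}=-(q-q^{-1})^{-1}\sum_{k=0}^n\sum_{\ell=0}^k\binom{k}{\ell}q^{2\ell-k}[2]_q^{-k-2}\tilde B_{(k-2\ell)\delta+\alpha_1}\mathcal G_{n-k}.$$
   Context: All algebras are associative and unital over a field $\mathbb F$; $q\in\mathbb F$ is nonzero and not a root of unity; $[n]_q=(q^n-q^{-n})/(q-q^{-1})$. For elements $X,Y$ of an algebra, $[X,Y]=XY-YX$ and $[X,Y]_q=qXY-q^{-1}YX$. Let $\rho=-(q^2-q^{-2})^2$. The algebra $\mathcal O_q$ is defined by generators $\mathcal W_{-k},\mathcal W_{k+1},\mathcal G_{k+1},\tilde{\mathcal G}_{k+1}$ ($k\in\mathbb N$) and the following relations for all $k,\ell\in\mathbb N$: $[\mathcal W_0,\mathcal W_{k+1}]=[\mathcal W_{-k},\mathcal W_1]=(\tilde{\mathcal G}_{k+1}-\mathcal G_{k+1})/(q+q^{-1})$; $[\mathcal W_0,\mathcal G_{k+1}]_q=[\tilde{\mathcal G}_{k+1},\mathcal W_0]_q=\rho\mathcal W_{-k-1}-\rho\mathcal W_{k+1}$; $[\mathcal G_{k+1},\mathcal W_1]_q=[\mathcal W_1,\tilde{\mathcal G}_{k+1}]_q=\rho\mathcal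 W_{k+2}-\rho\mathcal W_{-k}$; $[\mathcal W_{-k},\mathcal W_{-\ell}]=0$, $[\mathcal W_{k+1},\mathcal W_{\ell+1}]=0$; $[\mathcal W_{-k},\mathcal W_{\ell+1}]+[\mathcal W_{k+1},\mathcal W_{-\ell}]=0$; $[\mathcal W_{-k},\mathcal G_{\ell+1}]+[\mathcal G_{k+1},\mathcal W_{-\ell}]=0$; $[\mathcal W_{-k},\tilde{\mathcal G}_{\ell+1}]+[\tilde{\mathcal G}_{k+1},\mathcal W_{-\ell}]=0$; $[\mathcal W_{k+1},\mathcal G_{\ell+1}]+[\mathcal G_{k+1},\mathcal W_{\ell+1}]=0$; $[\mathcal W_{k+1},\tilde{\mathcal G}_{\ell+1}]+[\tilde{\mathcal G}_{k+1},\mathcal W_{\ell+1}]=0$; $[\mathcal G_{k+1},\mathcal G_{\ell+1}]=0$, $[\tilde{\mathcal G}_{k+1},\tilde{\mathcal G}_{\ell+1}]=0$; $[\tilde{\mathcal G}_{k+1},\mathcal G_{\ell+1}]+[\mathcal G_{k+1},\tilde{\mathcal G}_{\ell+1}]=0$. Convention: $\mathcal G_0=-(q-q^{-1})[2]_q^2$. Define $\tilde B_\delta=q^{-2}\mathcal W_0\mathcal W_1-\mathcal W_1\mathcal W_0$; $\tilde B_{\alpha_0}=\mathcal W_1$, $\tilde B_{\delta+\alpha_0}=\mathcal W_0+\frac{q[\tilde B_\delta,\mathcal W_1]}{(q-q^{-1})(q^2-q^{-2})}$, $\tilde B_{n\delta+\alpha_0}=\tilde B_{(n-2)\delta+\alpha_0}+\frac{q[\tilde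 B_\delta,\tilde B_{(n-1)\delta+\alpha_0}]}{(q-q^{-1})(q^2-q^{-2})}$ for $n\ge2$; $\tilde B_{\alpha_1}=\mathcal W_0$, $\tilde B_{\delta+\alpha_1}=\mathcal W_1-\frac{q[\tilde B_\delta,\mathcal W_0]}{(q-q^{-1})(q^2-q^{-2})}$, $\tilde B_{n\delta+\alpha_1}=\tilde B_{(n-2)\delta+\alpha_1}-\frac{q[\tilde B_\delta,\tilde B_{(n-1)\delta+\alpha_1}]}{(q-q^{-1})(q^2-q^{-2})}$ for $n\ge2$. For negative integers $k$, set $\tilde B_{k\delta+\alpha_0}=\tilde B_{(-k-1)\delta+\alpha_1}$ and $\tilde B_{k\delta+\alpha_1}=\tilde B_{(-k-1)\delta+\alpha_0}$. *)

(* Defs.v *)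
From HB Require Import structures.
From mathcomp Require Import all_boot all_order all_algebra.
Set Implicit Arguments. Unset Strict Implicit. Unset Printing Implicit Defensive.
Import Order.TTheory GRing.Theory Num.Theory.
Local Open Scope ring_scope.

(* Generators of O_q are encoded as:
     W  : int -> A      with  W z  = calW_z  (z = -k for k in N, z = k+1 for k in N: all of Z)
     G  : nat -> A      with  G (k+1) = calG_{k+1}   (value G 0 unused)
     Gt : nat -> A      with  Gt (k+1) = tilde calG_{k+1} (value Gt 0 unused) *)

Definition qnot_root_of_unity {F : fieldType} (q : F) : Prop :=
  forall n : nat, (0 < n)%N -> q ^+ n != 1.

Definition qint {F : fieldType} (q : F) (n : nat) : F :=
  (q ^+ n - q ^- n) / (q - q^-1).

Definition comm {R : pzRingType} (X Y : R) : R := X * Y - Y * X.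

Definition qcomm {F : fieldType} {A : algType F} (q : F) (X Y : A) : A :=
  q *: (X * Y) - q^-1 *: (Y * X).

Definition rho {F : fieldType} (q : F) : F := - (q ^+ 2 - q ^- 2) ^+ 2.

Definition Oq_relations {F : fieldType} {A : algType F} (q : F)
    (W : int -> A) (G Gt : nat -> A) : Prop :=
  forall k l : nat,
     comm (W 0) (W k.+1%:Z) = (q + q^-1)^-1 *: (Gt k.+1 - G k.+1)
  /\ comm (W (- k%:Z)) (W 1) = (q + q^-1)^-1 *: (Gt k.+1 - G k.+1)
  /\ qcomm q (W 0) (G k.+1) = rho q *: W (- k.+1%:Z) - rho q *: W k.+1%:Z
  /\ qcomm q (Gt k.+1) (W 0) = rho q *: W (- k.+1%:Z) - rho q *: W k.+1%:Z
  /\ qcomm q (G k.+1) (W 1) = rho q *: W k.+2%:Z - rho q *: W (- k%:Z)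
  /\ qcomm q (W 1) (Gt k.+1) = rho q *: W k.+2%:Z - rho q *: W (- k%:Z)
  /\ comm (W (- k%:Z)) (W (- l%:Z)) = 0
  /\ comm (W k.+1%:Z) (W l.+1%:Z) = 0
  /\ comm (W (- k%:Z)) (W l.+1%:Z) + comm (W k.+1%:Z) (W (- l%:Z)) = 0
  /\ comm (W (- k%:Z)) (G l.+1) + comm (G k.+1) (W (- l%:Z)) = 0
  /\ comm (W (- k%:Z)) (Gt l.+1) + comm (Gt k.+1) (W (- l%:Z)) = 0
  /\ comm (W k.+1%:Z) (G l.+1) + comm (G k.+1) (W l.+1%:Z) = 0
  /\ comm (W k.+1%:Z) (Gt l.+1) + comm (Gt k.+1) (W l.+1%:Z) = 0
  /\ comm (G k.+1) (G l.+1) = 0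
  /\ comm (Gt k.+1) (Gt l.+1) = 0
  /\ comm (Gt k.+1) (G l.+1) + comm (G k.+1) (Gt l.+1) = 0.

Definition Gc {F : fieldType} {A : algType F} (q : F) (G : nat -> A) (n : nat) : A :=
  if n is 0 then (- (q - q^-1) * qint q 2 ^+ 2) %:A else G n.

Section Bt.
Variables (F : fieldType) (A : algType F) (q : F) (W : int -> A).

Definition Bdelta : A := q ^- 2 *: (W 0 * W 1) - W 1 * W 0.

Definition cB : F := q / ((q - q^-1) * (q ^+ 2 - q ^- 2)).

(* B0 n = tilde B_{n delta + alpha_0}, n in N *)
Fixpoint B0 (n : nat) : A :=
  match n with
  | 0 => W 1
  | 1 => W 0 + cB *: comm Bdelta (W 1)
  | S ((S m) as m1) => B0 m + cB *: comm Bdelta (B0 m1)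
  end.

(* B1 n = tilde B_{n delta + alpha_1}, n in N *)
Fixpoint B1 (n : nat) : A :=
  match n with
  | 0 => W 0
  | 1 => W 1 - cB *: comm Bdelta (W 0)
  | S ((S m) as m1) => B1 m - cB *: comm Bdelta (B1 m1)
  end.

(* integer-indexed versions: for negative k, B_{k delta+alpha0} = B_{(-k-1) delta+alpha1} etc.
   Note Negz n = -(n+1), so -k-1 = n. *)
Definition Bt0 (z : int) : A := match z with Posz n => B0 n | Negz n => B1 n end.
Definition Bt1 (z : int) : A := match z with Posz n => B1 n | Negz n => B0 n end.
End Bt.

(* Main.v *)
Require Import Defs.
From HB Require Import structures.
From mathcomp Require Import all_boot all_order all_algebra.
From mathcomp Require Import zify ring lra.
Import Order.TTheory GRing.Theory Num.Theory.
Local Open Scope ring_scope.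
Set Implicit Arguments. Unset Strict Implicit. Unset Printing Implicit Defensive.

Inductive lexpr (F : Type) :=
| LAtom of nat | LAdd of lexpr F & lexpr F | LOpp of lexpr F
| LScale of F & lexpr F | LZero.

Fixpoint leval (F : fieldType) (V : lmodType F) (env : seq V) (e : lexpr F) : V :=
  match e with
  | LAtom n => nth 0 env n
  | LAdd a b => leval env a + leval env b
  | LOpp a => - leval env a
  | LScale c a => c *: leval env a
  | LZero => 0
  end.

Fixpoint lcoef (F : fieldType) (e : lexpr F) (i : nat) : F :=
  match e with
  | LAtom n => if i == n then 1 else 0
  | LAdd a b => lcoef a i + lcoef b i
  | LOpp a => - lcoef a i
  | LScale c a => c * lcoef a i
  | LZero => 0
  end.

Fixpoint check_all (n : nat) (P : nat -> Prop) : Prop :=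
  match n with 0 => True | S m => P m /\ check_all m P end.

Lemma check_allP n P : check_all n P -> forall i, (i < n)%N -> P i.
Proof.
elim: n => [|n IH] //= [Pn H] i; rewrite ltnS leq_eqVlt => /orP [/eqP -> //|].
exact: IH.
Qed.

Lemma leval_sum (F : fieldType) (V : lmodType F) (env : seq V) (e : lexpr F) :
  leval env e = \sum_(i < size env) lcoef e i *: nth 0 env i.
Proof.
elim: e => [n|a IHa b IHb|a IHa|c a IHa|] /=.
- case: (ltnP n (size env)) => Hn.
  + rewrite (bigD1 (Ordinal Hn)) //= eqxx scale1r big1 ?addr0 // => i /negbTE.
    by rewrite -val_eqE /= => ->; rewrite scale0r.
  + rewrite nth_default // big1 // => i _.
    by rewrite ifN ?scale0r // neq_ltn (leq_trans (ltn_ord i) Hn).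
- by rewrite IHa IHb -big_split /=; apply: eq_bigr => i _; rewrite scalerDl.
- by rewrite IHa -sumrN; apply: eq_bigr => i _; rewrite scaleNr.
- by rewrite IHa scaler_sumr; apply: eq_bigr => i _; rewrite scalerA.
- by rewrite big1 // => i _; rewrite scale0r.
Qed.

Lemma lcheck (F : fieldType) (V : lmodType F) (env : seq V) (e1 e2 : lexpr F) :
  check_all (size env) (fun i => lcoef e1 i = lcoef e2 i) ->
  leval env e1 = leval env e2.
Proof.
move=> H; rewrite !leval_sum; apply: eq_bigr => i _.
by rewrite (check_allP H (ltn_ord i)).
Qed.

Ltac inlist x l :=
  lazymatch l with
  | nil => constr:(false)
  | ?y :: ?r => match tt with _ => let _ := match goal with _ => unify x y end in constr:(true) | _ => inlist x r end
  end.

Ltac lindex x l :=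
  lazymatch l with
  | ?y :: ?r => match tt with _ => let _ := match goal with _ => unify x y end in constr:(0%N) | _ => let n := lindex x r in constr:(S n) end
  end.

Ltac lcollect t acc :=
  lazymatch t with
  | ?a + ?b => let acc := lcollect a acc in lcollect b acc
  | - ?a => lcollect a acc
  | ?c *: ?a => lcollect a acc
  | 0 => acc
  | _ => let b := inlist t acc in
         lazymatch b with true => acc | false => constr:(t :: acc) end
  end.

Ltac lreify F t env :=
  lazymatch t with
  | ?a + ?b => let x := lreify F a env in let y := lreify F b env in constr:(@LAdd F x y)
  | - ?a => let x := lreify F a env in constr:(@LOpp F x)
  | ?c *: ?a => let x := lreify F a env in constr:(@LScale F c x)
  | 0 => constr:(@LZero F)
  | _ => let n := lindex t env in constr:(@LAtom F n)
  end.

Ltac lin_reify F :=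
  match goal with |- @eq ?V ?L ?R =>
    let env := lcollect L (@nil V) in
    let env := lcollect R env in
    let e1 := lreify F L env in
    let e2 := lreify F R env in
    change (leval env e1 = leval env e2); apply: lcheck; cbn -[GRing.add GRing.mul GRing.opp GRing.inv GRing.one GRing.zero]
  end.


Ltac nc_expand :=
  rewrite ?(mulrDl, mulrDr, mulrBl, mulrBr, mulrN, mulNr, opprK, opprD, scalerDr, scalerBr, scalerN, scalerA);
  rewrite -?(scalerAl, scalerAr);
  rewrite ?(mulrA, scalerA, scalerN, opprK, scalerDr, scalerBr, opprD).

Lemma commD (R : pzRingType) (x y z : R) : comm x (y + z) = comm x y + comm x z.
Proof. by rewrite /comm mulrDl mulrDr opprD addrACA. Qed.
Lemma commN (R : pzRingType) (x y : R) : comm x (- y) = - comm x y.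
Proof. by rewrite /comm mulrN mulNr opprK opprB addrC. Qed.
Lemma commB (R : pzRingType) (x y z : R) : comm x (y - z) = comm x y - comm x z.
Proof. by rewrite commD commN. Qed.
Lemma commZ (F : fieldType) (A : algType F) (a : F) (x y : A) : comm x (a *: y) = a *: comm x y.
Proof. by rewrite /comm -scalerAr -scalerAl scalerBr. Qed.
Lemma commZl (F : fieldType) (A : algType F) (a : F) (x y : A) : comm (a *: x) y = a *: comm x y.
Proof. by rewrite /comm -scalerAr -scalerAl scalerBr. Qed.
Lemma commDl (R : pzRingType) (x y z : R) : comm (x + y) z = comm x z + comm y z.
Proof. by rewrite /comm mulrDl mulrDr opprD addrACA. Qed.
Lemma commNl (R : pzRingType) (x y : R) : comm y x = - comm x y.
Proof. by rewrite /comm opprB. Qed.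
Lemma commBl (R : pzRingType) (x y z : R) : comm (x - y) z = comm x z - comm y z.
Proof. by rewrite [LHS]commNl commB opprB [comm z y]commNl [comm z x]commNl opprK addrC. Qed.
Lemma comm_sum (R : pzRingType) (x : R) (I : Type) (r : seq I) (P : pred I) (f : I -> R) :
  comm x (\sum_(i <- r | P i) f i) = \sum_(i <- r | P i) comm x (f i).
Proof. by rewrite /comm mulr_sumr mulr_suml -sumrB. Qed.
Lemma commM (R : pzRingType) (x y z : R) : comm x (y * z) = comm x y * z + y * comm x z.
Proof. by rewrite /comm mulrBl mulrBr !mulrA addrA subrK. Qed.

Lemma comm_alg (F : fieldType) (A : algType F) (x : A) (a : F) : comm x (a%:A) = 0.
Proof. by rewrite /comm mulr_algl mulr_algr subrr. Qed.

Ltac fside := repeat (apply/andP; split); assumption.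
Ltac lin F := try unfold rho; nc_expand; lin_reify F; repeat split; try ring; try (field; fside).

Lemma lin_use1 (F : fieldType) (V : lmodType F) (L R X1 Y1 : V) (k1 : F) :
  X1 = Y1 -> L - R = k1 *: (X1 - Y1) -> L = R.
Proof. by move=> ->; rewrite subrr scaler0 => /eqP; rewrite subr_eq0 => /eqP. Qed.
Lemma lin_use2 (F : fieldType) (V : lmodType F) (L R X1 Y1 X2 Y2 : V) (k1 k2 : F) :
  X1 = Y1 -> X2 = Y2 -> L - R = k1 *: (X1 - Y1) + k2 *: (X2 - Y2) -> L = R.
Proof. by move=> -> ->; rewrite !subrr !scaler0 addr0 => /eqP; rewrite subr_eq0 => /eqP. Qed.
Lemma lin_use3 (F : fieldType) (V : lmodType F) (L R X1 Y1 X2 Y2 X3 Y3 : V) (k1 k2 k3 : F) :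
  X1 = Y1 -> X2 = Y2 -> X3 = Y3 ->
  L - R = k1 *: (X1 - Y1) + k2 *: (X2 - Y2) + k3 *: (X3 - Y3) -> L = R.
Proof. by move=> -> -> ->; rewrite !subrr !scaler0 !addr0 => /eqP; rewrite subr_eq0 => /eqP. Qed.

Lemma qfacts (F : fieldType) (q : F) : q != 0 -> qnot_root_of_unity q ->
  [/\ q - q^-1 != 0, q + q^-1 != 0, q ^+ 2 - q ^- 2 != 0, q ^+ 3 - q^-1 != 0 &
      (q * q - 1 != 0) /\ (q * q + 1 != 0)].
Proof.
move=> hq hr.
have h2 : q ^+ 2 != 1 by apply: hr.
have h4 : q ^+ 4 != 1 by apply: hr.
have e1 : q - q^-1 = (q ^+ 2 - 1) / q by field.
have e2 : q + q^-1 = (q ^+ 2 + 1) / q by field.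
have e3 : q ^+ 2 - q ^- 2 = (q ^+ 4 - 1) / q ^+ 2 by field.
have e4 : q ^+ 3 - q^-1 = (q ^+ 4 - 1) / q by field.
have n4 : q ^+ 4 - 1 != 0 by rewrite subr_eq0.
have n2 : q ^+ 2 - 1 != 0 by rewrite subr_eq0.
have n2' : q ^+ 2 + 1 != 0.
  apply: contra h4 => /eqP h; apply/eqP.
  have -> : q ^+ 4 = (q ^+ 2) ^+ 2 by rewrite -exprM.
  have -> : q ^+ 2 = -1 by apply/eqP; rewrite -subr_eq0 opprK h.
  by rewrite sqrrN expr1n.
split.
- by rewrite e1 mulf_neq0 ?invr_eq0.
- by rewrite e2 mulf_neq0 ?invr_eq0.
- by rewrite e3 mulf_neq0 ?invr_eq0 ?expf_neq0.
- by rewrite e4 mulf_neq0 ?invr_eq0.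
- by rewrite -expr2.
Qed.

Lemma qint2 (F : fieldType) (q : F) : q != 0 -> q - q^-1 != 0 -> qint q 2 = q + q^-1.
Proof.
move=> hq hd; have hqq : q * q - 1 != 0.
  apply: contra hd => /eqP h; apply/eqP.
  have e : q - q^-1 = q^-1 * (q * q - 1) by field.
  by rewrite e h mulr0.
by rewrite /qint; field; rewrite hq hqq.
Qed.

Lemma qc_sub (F : fieldType) (A : algType F) (q : F) (a b : A) : q != 0 ->
  qcomm q a b - qcomm q b a = (q + q^-1) *: comm a b.
Proof. move=> hq; rewrite /qcomm /comm; lin F. Qed.

Lemma comm_qcomm (F : fieldType) (A : algType F) (q : F) (z x y : A) :
  comm z (qcomm q x y) = qcomm q (comm z x) y + qcomm q x (comm z y).
Proof. rewrite /qcomm /comm; lin F. Qed.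

Lemma comm_comm (F : fieldType) (A : algType F) (z x y : A) :
  comm z (comm x y) = comm (comm z x) y + comm x (comm z y).
Proof. rewrite /comm; lin F. Qed.

Lemma qc0 (F : fieldType) (A : algType F) (q : F) (a h : A) : q != 0 ->
  q ^+ 3 - q^-1 != 0 -> qcomm q a h = 0 -> qcomm q h a = 0 -> a * h = 0.
Proof.
move=> hq h3 e1 e2.
have : (q ^+ 3 - q^-1) *: (a * h) = 0.
  apply: (lin_use2 (k1 := q ^+ 2) (k2 := 1) e1 e2); rewrite /qcomm; lin F.
by move/eqP; rewrite scaler_eq0 (negbTE h3) /= => /eqP.
Qed.

Lemma D3 (F : fieldType) (A : algType F) (q : F) (a b Y : A) : q != 0 ->
  comm b Y = 0 ->
  qcomm q b (comm a Y) = - q *: comm (q ^- 2 *: (a * b) - b * a) Y.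
Proof.
move=> hq e.
have e1 : a * comm b Y = 0 by rewrite e mulr0.
have e2 : comm b Y * a = 0 by rewrite e mul0r.
apply: (lin_use2 (k1 := q^-1) (k2 := - q) e1 e2); rewrite /qcomm /comm; lin F.
Qed.

Lemma D1 (F : fieldType) (A : algType F) (q : F) (W : int -> A) (G Gt : nat -> A) :
  q != 0 -> qnot_root_of_unity q -> Oq_relations q W G Gt -> forall k : nat,
  comm (G k.+1) (W 1) = qcomm q (W 1) (comm (W 0) (W k.+1%:Z)).
Proof.
move=> hq hr H k; have [h1 h2 h3 h4 [h5 h6]] := qfacts hq hr.
have [R1 [_ [_ [_ [R5 [R6 _]]]]]] := H k 0%N.
set C := comm (W 0) (W k.+1%:Z) in R1 *.
have hGt : Gt k.+1 = G k.+1 + (q + q^-1) *: C.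
  by rewrite R1 scalerA mulfV // scale1r addrC subrK.
have E : qcomm q (G k.+1) (W 1) = qcomm q (W 1) (Gt k.+1) by rewrite R5 R6.
rewrite hGt in E.
apply: (lin_use1 (k1 := (q + q^-1)^-1) E); rewrite /qcomm /comm; lin F.
Qed.

Lemma D2 (F : fieldType) (A : algType F) (q : F) (W : int -> A) (G Gt : nat -> A) :
  q != 0 -> qnot_root_of_unity q -> Oq_relations q W G Gt -> forall k : nat,
  comm (Gt k.+1) (W 0) = qcomm q (W 0) (comm (W 1) (W (- k%:Z))).
Proof.
move=> hq hr H k; have [h1 h2 h3 h4 [h5 h6]] := qfacts hq hr.
have [_ [R2 [R3 [R4 _]]]] := H k 0%N.
set C := comm (W 1) (W (- k%:Z)).
have R2' : C = (q + q^-1)^-1 *: (G k.+1 - Gt k.+1).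
  by rewrite /C commNl R2 -scalerN opprB.
have hG : G k.+1 = Gt k.+1 + (q + q^-1) *: C.
  by rewrite R2' scalerA mulfV // scale1r addrC subrK.
have E : qcomm q (W 0) (G k.+1) = qcomm q (Gt k.+1) (W 0) by rewrite R3 R4.
rewrite hG in E.
apply: (lin_use1 (k1 := - (q + q^-1)^-1) E); rewrite /qcomm /comm; lin F.
Qed.

Lemma D5 (F : fieldType) (A : algType F) (q : F) (W : int -> A) (G Gt : nat -> A) :
  q != 0 -> qnot_root_of_unity q -> Oq_relations q W G Gt ->
  G 1%N + q *: Bdelta q W = Gt 1%N + q *: (q ^- 2 *: (W 1 * W 0) - W 0 * W 1).
Proof.
move=> hq hr H; have [h1 h2 h3 h4 [h5 h6]] := qfacts hq hr.
have [R1 _] := H 0%N 0%N.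
have R1' : comm (W 0) (W 1) = (q + q^-1)^-1 *: (Gt 1%N - G 1%N) := R1.
apply: (lin_use1 (k1 := q + q^-1) R1'); rewrite /Bdelta /comm; lin F.
Qed.

Lemma D6 (F : fieldType) (A : algType F) (q : F) (W : int -> A) (G Gt : nat -> A) :
  q != 0 -> qnot_root_of_unity q -> Oq_relations q W G Gt -> forall k : nat,
  comm (G 1%N + q *: Bdelta q W) (W k.+1%:Z) = 0.
Proof.
move=> hq hr H k.
have [_ [_ [_ [_ [_ [_ [_ [R8 [_ [_ [_ [R12 _]]]]]]]]]]]] := H k 0%N.
rewrite commDl commZl [comm (G 1%N) _]commNl.
move/eqP: R12; rewrite addr_eq0 => /eqP R12; rewrite R12 opprK (D1 hq hr H).
have R8' : comm (W 1) (W k.+1%:Z) = 0 by rewrite commNl R8 oppr0.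
by rewrite (D3 (W 0) hq R8') /Bdelta scaleNr addNr.
Qed.

Lemma D7 (F : fieldType) (A : algType F) (q : F) (W : int -> A) (G Gt : nat -> A) :
  q != 0 -> qnot_root_of_unity q -> Oq_relations q W G Gt -> forall k : nat,
  comm (G 1%N + q *: Bdelta q W) (W (- k%:Z)) = 0.
Proof.
move=> hq hr H k.
have [_ [_ [_ [_ [_ [_ [R7 [_ [_ [_ [R11 _]]]]]]]]]]] := H k 0%N.
rewrite (D5 hq hr H) commDl commZl [comm (Gt 1%N) _]commNl.
have R11' : comm (W (- k%:Z)) (Gt 1%N) + comm (Gt k.+1) (W 0) = 0 := R11.
move/eqP: R11'; rewrite addr_eq0 => /eqP ->; rewrite opprK (D2 hq hr H).
have R7' : comm (W 0) (W (- k%:Z)) = 0.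
  by rewrite commNl; have -> : comm (W (- k%:Z)) (W 0) = 0 := R7; rewrite oppr0.
by rewrite (D3 (W 1) hq R7') scaleNr addNr.
Qed.

Lemma D8 (F : fieldType) (A : algType F) (q : F) (W : int -> A) (G Gt : nat -> A) :
  q != 0 -> qnot_root_of_unity q -> Oq_relations q W G Gt -> forall k : nat,
  comm (G k.+1) (W 0) = - q *: comm (Bdelta q W) (W (- k%:Z)).
Proof.
move=> hq hr H k.
have [_ [_ [_ [_ [_ [_ [_ [_ [_ [R10 _]]]]]]]]]] := H k 0%N.
have R10' : comm (W (- k%:Z)) (G 1%N) + comm (G k.+1) (W 0) = 0 := R10.
move/eqP: R10'; rewrite addrC addr_eq0 => /eqP ->; rewrite -commNl.
have e : G 1%N = (G 1%N + q *: Bdelta q W) - q *: Bdelta q W by rewrite addrK.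
by rewrite e commBl (D7 hq hr H) commZl sub0r scaleNr.
Qed.

Lemma D9 (F : fieldType) (A : algType F) (q : F) (W : int -> A) (G Gt : nat -> A) :
  q != 0 -> qnot_root_of_unity q -> Oq_relations q W G Gt -> forall k : nat,
  comm (G k.+1) (W 1) = - q *: comm (Bdelta q W) (W k.+1%:Z).
Proof.
move=> hq hr H k.
have [_ [_ [_ [_ [_ [_ [_ [_ [_ [_ [_ [R12 _]]]]]]]]]]]] := H k 0%N.
move/eqP: R12; rewrite addrC addr_eq0 => /eqP ->; rewrite -commNl.
have e : G 1%N = (G 1%N + q *: Bdelta q W) - q *: Bdelta q W by rewrite addrK.
by rewrite e commBl (D6 hq hr H) commZl sub0r scaleNr.
Qed.

Lemma Rm (F : fieldType) (A : algType F) (q : F) (W : int -> A) (G Gt : nat -> A) :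
  q != 0 -> qnot_root_of_unity q -> Oq_relations q W G Gt -> forall k : nat,
  rho q *: (W (- k.+1%:Z) - W k.+1%:Z) =
    (q - q^-1) *: (W 0 * G k.+1) + comm (Bdelta q W) (W (- k%:Z)).
Proof.
move=> hq hr H k; have [h1 h2 h3 h4 [h5 h6]] := qfacts hq hr.
have [_ [_ [R3 _]]] := H k 0%N.
have E := D8 hq hr H k.
set cb := comm (Bdelta q W) _ in E *; clearbody cb.
apply: (lin_use2 (k1 := -1) (k2 := - q^-1) R3 E); rewrite /qcomm /comm; lin F.
Qed.

Lemma Rp (F : fieldType) (A : algType F) (q : F) (W : int -> A) (G Gt : nat -> A) :
  q != 0 -> qnot_root_of_unity q -> Oq_relations q W G Gt -> forall k : nat,
  rho q *: (W k.+2%:Z - W (- k%:Z)) =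
    (q - q^-1) *: (W 1 * G k.+1) - q ^+ 2 *: comm (Bdelta q W) (W k.+1%:Z).
Proof.
move=> hq hr H k; have [h1 h2 h3 h4 [h5 h6]] := qfacts hq hr.
have [_ [_ [_ [_ [R5 _]]]]] := H k 0%N.
have E := D9 hq hr H k.
set cb := comm (Bdelta q W) _ in E *; clearbody cb.
apply: (lin_use2 (k1 := -1) (k2 := q) R5 E); rewrite /qcomm /comm; lin F.
Qed.

Lemma comm0l (R : pzRingType) (x : R) : comm 0 x = 0.
Proof. by rewrite /comm mul0r mulr0 subrr. Qed.
Lemma comm0r (R : pzRingType) (x : R) : comm x 0 = 0.
Proof. by rewrite /comm mul0r mulr0 subrr. Qed.
Lemma qcomm0l (F : fieldType) (A : algType F) (q : F) (x : A) : qcomm q 0 x = 0.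
Proof. by rewrite /qcomm mul0r mulr0 !scaler0 subrr. Qed.
Lemma qcomm0r (F : fieldType) (A : algType F) (q : F) (x : A) : qcomm q x 0 = 0.
Proof. by rewrite /qcomm mul0r mulr0 !scaler0 subrr. Qed.

Lemma D10 (F : fieldType) (A : algType F) (q : F) (W : int -> A) (G Gt : nat -> A) :
  q != 0 -> qnot_root_of_unity q -> Oq_relations q W G Gt -> forall k : nat,
  W 0 * comm (Bdelta q W) (G k.+1) = 0 /\ W 1 * comm (Bdelta q W) (G k.+1) = 0.
Proof.
move=> hq hr H k; have [h1 h2 h3 h4 [h5 h6]] := qfacts hq hr.
have [R1 [_ [R3 [R4 [R5 [R6 _]]]]]] := H k 0%N.
have [_ [_ [_ [_ [_ [_ [_ [_ [_ [_ [_ [_ [_ [R14 _]]]]]]]]]]]]]] := H 0%N k.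
set z := G 1%N + q *: Bdelta q W.
have hz0 : comm z (W 0) = 0 := D7 hq hr H 0.
have hzp : forall j : nat, comm z (W j.+1%:Z) = 0 := D6 hq hr H.
have hzm : forall j : nat, comm z (W (- j%:Z)) = 0 := D7 hq hr H.
have hz1 : comm z (W 1) = 0 := hzp 0%N.
set Hz := comm z (G k.+1).
have eH : Hz = q *: comm (Bdelta q W) (G k.+1).
  by rewrite /Hz /z commDl commZl R14 add0r.
have hGt : Gt k.+1 = G k.+1 + (q + q^-1) *: comm (W 0) (W k.+1%:Z).
  by rewrite R1 scalerA mulfV // scale1r addrC subrK.
have eHt : comm z (Gt k.+1) = Hz.
  by rewrite hGt commD commZ comm_comm hz0 hzp comm0l comm0r addr0 scaler0 addr0.
have e3 : qcomm q (W 0) Hz = 0.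
  have := congr1 (comm z) R3.
  by rewrite comm_qcomm hz0 qcomm0l add0r commB !commZ hzm hzp scaler0 subrr.
have e4 : qcomm q Hz (W 0) = 0.
  have := congr1 (comm z) R4.
  by rewrite comm_qcomm hz0 qcomm0r addr0 eHt commB !commZ hzm hzp scaler0 subrr.
have e5 : qcomm q Hz (W 1) = 0.
  have := congr1 (comm z) R5.
  by rewrite comm_qcomm hz1 qcomm0r addr0 commB !commZ hzm hzp scaler0 subrr.
have e6 : qcomm q (W 1) Hz = 0.
  have := congr1 (comm z) R6.
  by rewrite comm_qcomm hz1 qcomm0l add0r eHt commB !commZ hzm hzp scaler0 subrr.
have f0 := qc0 hq h4 e3 e4.
have f1 := qc0 hq h4 e6 e5.
rewrite eH -!scalerAr in f0 f1.
move/eqP: f0; rewrite scaler_eq0 (negbTE hq) /= => /eqP ->.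
by move/eqP: f1; rewrite scaler_eq0 (negbTE hq) /= => /eqP ->.
Qed.

Lemma B_kill (F : fieldType) (A : algType F) (q : F) (W : int -> A) (h : A) :
  W 0 * h = 0 -> W 1 * h = 0 -> forall j : int, Bt0 q W j * h = 0.
Proof.
move=> h0 h1.
have hd : Bdelta q W * h = 0.
  by rewrite /Bdelta mulrBl -scalerAl -!mulrA h0 h1 !mulr0 scaler0 subrr.
have hc : forall Y, Y * h = 0 -> comm (Bdelta q W) Y * h = 0.
  by move=> Y hY; rewrite /comm mulrBl -!mulrA hY hd !mulr0 subrr.
have P0 : forall n, B0 q W n * h = 0 /\ B0 q W n.+1 * h = 0.
  elim=> [|n [IH1 IH2]]; first by split => //=; rewrite mulrDl h0 -scalerAl hc ?scaler0 ?addr0.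
  by split => //=; rewrite mulrDl IH1 -scalerAl hc ?scaler0 ?addr0.
have P1 : forall n, B1 q W n * h = 0 /\ B1 q W n.+1 * h = 0.
  elim=> [|n [IH1 IH2]]; first by split => //=; rewrite mulrBl h1 -scalerAl hc ?scaler0 ?subr0.
  by split => //=; rewrite mulrBl IH1 -scalerAl hc ?scaler0 ?subr0.
by case=> n /=; [case: (P0 n) | case: (P1 n)].
Qed.

Lemma Bt1E (F : fieldType) (A : algType F) (q : F) (W : int -> A) (z : int) :
  Bt1 q W z = Bt0 q W (- z - 1).
Proof.
case: z => n.
- by have -> : (- n%:Z - 1) = Negz n by rewrite NegzE; lia.
- by have -> : (- Negz n - 1) = n%:Z by rewrite NegzE; lia.
Qed.

Lemma UR (F : fieldType) (A : algType F) (q : F) (W : int -> A) (j : int) :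
  Bt0 q W (j + 1) = Bt0 q W (j - 1) + cB q *: comm (Bdelta q W) (Bt0 q W j).
Proof.
case: j => [[|n]|[|n]].
- by [].
- have -> : (n.+1%:Z + 1) = n.+2%:Z by lia.
  by have -> : (n.+1%:Z - 1) = n%:Z by lia.
- by rewrite /= subrK.
- have -> : (Negz n.+1 + 1) = Negz n by rewrite !NegzE; lia.
  have -> : (Negz n.+1 - 1) = Negz n.+2 by rewrite !NegzE; lia.
  by rewrite /= subrK.
Qed.

Definition Sfun (F : fieldType) (A : algType F) (q : F) (W : int -> A) (m : nat) (s : int) : A :=
  \sum_(0 <= l < m.+1) ('C(m, l)%:R * q ^ (m%:Z - 2 * l%:Z)) *: Bt0 q W (m%:Z - 2 * l%:Z + s).

Lemma Pascal (F : fieldType) (A : algType F) (q : F) (W : int -> A) (m : nat) (s : int) :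
  q != 0 ->
  Sfun q W m.+1 s = q *: Sfun q W m (s + 1) + q^-1 *: Sfun q W m (s - 1).
Proof.
move=> hq.
pose T l := q ^ (m.+1%:Z - 2 * l%:Z) *: Bt0 q W (m.+1%:Z - 2 * l%:Z + s).
have -> : Sfun q W m.+1 s = \sum_(0 <= l < m.+2) 'C(m.+1, l)%:R *: T l.
  by apply: eq_bigr => l _; rewrite /T scalerA.
rewrite big_nat_recl //.
under eq_bigr do rewrite binS natrD scalerDl.
rewrite big_split /= addrA.
have -> : 'C(m.+1, 0)%:R *: T 0%N + \sum_(0 <= i < m.+1) 'C(m, i.+1)%:R *: T i.+1
          = \sum_(0 <= i < m.+1) 'C(m, i)%:R *: T i.
  transitivity (\sum_(0 <= i < m.+2) 'C(m, i)%:R *: T i).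
    by rewrite (big_nat_recl m.+1) // !bin0.
  by rewrite big_nat_recr //= bin_small // scale0r addr0.
congr (_ + _); rewrite /Sfun scaler_sumr; apply: eq_bigr => l _; rewrite /T !scalerA.
- congr (_ *: _); last by congr (Bt0 q W _); lia.
  have -> : (m.+1%:Z - 2 * l%:Z) = 1 + (m%:Z - 2 * l%:Z) by lia.
  by rewrite (expfzDr 1 (m%:Z - 2 * l%:Z) hq) expr1z mulrCA.
- congr (_ *: _); last by congr (Bt0 q W _); lia.
  have -> : (m.+1%:Z - 2 * l.+1%:Z) = -1 + (m%:Z - 2 * l%:Z) by lia.
  by rewrite (expfzDr (-1) (m%:Z - 2 * l%:Z) hq) exprN1 mulrCA.
Qed.

Lemma Sfun_comm (F : fieldType) (A : algType F) (q : F) (W : int -> A) (m : nat) (s : int) :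
  cB q *: comm (Bdelta q W) (Sfun q W m s) = Sfun q W m (s + 1) - Sfun q W m (s - 1).
Proof.
rewrite /Sfun comm_sum scaler_sumr -sumrB; apply: eq_bigr => l _.
rewrite commZ -scalerBr [LHS]scalerA mulrC -scalerA; congr (_ *: _).
by rewrite !addrA UR [RHS]addrC [RHS]addKr.
Qed.

Lemma Sfun_kill (F : fieldType) (A : algType F) (q : F) (W : int -> A) (h : A) :
  W 0 * h = 0 -> W 1 * h = 0 -> forall m s, Sfun q W m s * h = 0.
Proof.
move=> h0 h1 m s; rewrite /Sfun mulr_suml big1 // => l _.
by rewrite -scalerAl B_kill ?scaler0.
Qed.

Lemma Sfun0 (F : fieldType) (A : algType F) (q : F) (W : int -> A) (s : int) :
  Sfun q W 0 s = Bt0 q W s.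
Proof. by rewrite /Sfun big_nat1 bin0 /= mul1r expr0z scale1r add0r. Qed.

Definition kap (F : fieldType) (q : F) (k : nat) : F :=
  - (q - q^-1)^-1 * (qint q 2 ^+ (k + 2))^-1.
Definition Xp (F : fieldType) (A : algType F) (q : F) (W : int -> A) (k : nat) : A :=
  kap q k *: Sfun q W k 0.
Definition Xm (F : fieldType) (A : algType F) (q : F) (W : int -> A) (k : nat) : A :=
  kap q k *: Sfun q W k (-1).

Lemma cB_neq0 (F : fieldType) (q : F) : q != 0 -> qnot_root_of_unity q -> cB q != 0.
Proof.
move=> hq hr; have [h1 h2 h3 h4 _] := qfacts hq hr.
by rewrite /cB mulf_neq0 // invr_eq0 mulf_neq0.
Qed.

Lemma rho_neq0 (F : fieldType) (q : F) : q != 0 -> qnot_root_of_unity q -> rho q != 0.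
Proof.
move=> hq hr; have [h1 h2 h3 h4 _] := qfacts hq hr.
by rewrite /rho oppr_eq0 expf_neq0.
Qed.

Lemma rhoE (F : fieldType) (q : F) : q != 0 ->
  rho q = - ((q - q^-1) ^+ 2 * (q + q^-1) ^+ 2).
Proof.
move=> hq; rewrite /rho -exprMn.
by have -> : q ^+ 2 - q ^- 2 = (q - q^-1) * (q + q^-1) by field.
Qed.

Lemma cBE (F : fieldType) (q : F) : q != 0 ->
  cB q = q / ((q - q^-1) ^+ 2 * (q + q^-1)).
Proof.
move=> hq; rewrite /cB.
by have -> : (q - q^-1) * (q ^+ 2 - q ^- 2) = (q - q^-1) ^+ 2 * (q + q^-1) by field.
Qed.

Lemma CX1 (F : fieldType) (A : algType F) (q : F) (W : int -> A) (k : nat) :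
  q != 0 -> qnot_root_of_unity q ->
  Xm q W k.+1 = Xp q W k + (rho q)^-1 *: comm (Bdelta q W) (Xm q W k).
Proof.
move=> hq hr; have [h1 h2 h3 h4 [h5 h6]] := qfacts hq hr.
have hcB := cB_neq0 hq hr.
rewrite /Xm /Xp Pascal // commZ.
have E' : comm (Bdelta q W) (Sfun q W k (-1)) =
    (cB q)^-1 *: (Sfun q W k (-1 + 1) - Sfun q W k (-1 - 1)).
  by rewrite -Sfun_comm scalerA mulVf // scale1r.
rewrite E'.
have -> : (-1 + 1 : int) = 0 by [].
rewrite /kap qint2 // addSn exprS.
have hT : (q + q^-1) ^+ (k + 2) != 0 by rewrite expf_neq0.
move: ((q + q^-1) ^+ (k + 2)) hT (Sfun q W k 0) (Sfun q W k (-1 - 1)) => T hT S0 S2.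
rewrite (cBE hq) (rhoE hq).
move: (q - q^-1) h1 => u hu.
have s1 : u ^+ 2 * q * q + u ^+ 2 != 0.
  have -> : u ^+ 2 * q * q + u ^+ 2 = u ^+ 2 * (q * q + 1) by ring.
  by rewrite mulf_neq0 ?expf_neq0.
have s2 : - (u ^+ 2 * (q * q + 1) * (q * q + 1)) != 0.
  by rewrite oppr_eq0 !mulf_neq0 ?expf_neq0.
have s3 : q * T * q + T != 0.
  have -> : q * T * q + T = T * (q * q + 1) by ring.
  by rewrite mulf_neq0.
lin F.
Qed.

Lemma CX2 (F : fieldType) (A : algType F) (q : F) (W : int -> A) (k : nat) :
  q != 0 -> qnot_root_of_unity q ->
  Xp q W k.+1 = Xm q W k - ((rho q)^-1 * q ^+ 2) *: comm (Bdelta q W) (Xp q W k).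
Proof.
move=> hq hr; have [h1 h2 h3 h4 [h5 h6]] := qfacts hq hr.
have hcB := cB_neq0 hq hr.
rewrite /Xm /Xp Pascal // commZ.
have E' : comm (Bdelta q W) (Sfun q W k 0) =
    (cB q)^-1 *: (Sfun q W k (0 + 1) - Sfun q W k (0 - 1)).
  by rewrite -Sfun_comm scalerA mulVf // scale1r.
rewrite E'.
have -> : (0 - 1 : int) = -1 by [].
rewrite /kap qint2 // addSn exprS.
have hT : (q + q^-1) ^+ (k + 2) != 0 by rewrite expf_neq0.
move: ((q + q^-1) ^+ (k + 2)) hT (Sfun q W k (0 + 1)) (Sfun q W k (-1)) => T hT S0 S2.
rewrite (cBE hq) (rhoE hq).
move: (q - q^-1) h1 => u hu.
have s1 : u ^+ 2 * q * q + u ^+ 2 != 0.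
  have -> : u ^+ 2 * q * q + u ^+ 2 = u ^+ 2 * (q * q + 1) by ring.
  by rewrite mulf_neq0 ?expf_neq0.
have s2 : - (u ^+ 2 * (q * q + 1) * (q * q + 1)) != 0.
  by rewrite oppr_eq0 !mulf_neq0 ?expf_neq0.
have s3 : q * T * q + T != 0.
  have -> : q * T * q + T = T * (q * q + 1) by ring.
  by rewrite mulf_neq0.
lin F.
Qed.

Lemma commBd_sum (F : fieldType) (A : algType F) (q : F) (W : int -> A) (G Gt : nat -> A) :
  q != 0 -> qnot_root_of_unity q -> Oq_relations q W G Gt ->
  forall (X : nat -> A), (forall k h, W 0 * h = 0 -> W 1 * h = 0 -> X k * h = 0) ->
  forall n, comm (Bdelta q W) (\sum_(0 <= k < n.+1) X k * Gc q G (n - k)) =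
            \sum_(0 <= k < n.+1) comm (Bdelta q W) (X k) * Gc q G (n - k).
Proof.
move=> hq hr H X hX n; rewrite comm_sum; apply: eq_bigr => k _.
rewrite commM; case: (n - k)%N => [|j] /=.
  by rewrite comm_alg mulr0 addr0.
have [e0 e1] := D10 hq hr H j.
by rewrite hX // addr0.
Qed.

Lemma Xp_kill (F : fieldType) (A : algType F) (q : F) (W : int -> A) k h :
  W 0 * h = 0 -> W 1 * h = 0 -> Xp q W k * h = 0.
Proof. by move=> h0 h1; rewrite /Xp -scalerAl Sfun_kill // scaler0. Qed.
Lemma Xm_kill (F : fieldType) (A : algType F) (q : F) (W : int -> A) k h :
  W 0 * h = 0 -> W 1 * h = 0 -> Xm q W k * h = 0.
Proof. by move=> h0 h1; rewrite /Xm -scalerAl Sfun_kill // scaler0. Qed.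

Lemma kap0E (F : fieldType) (q : F) : q != 0 -> qnot_root_of_unity q ->
  kap q 0 = (rho q)^-1 * (q - q^-1).
Proof.
move=> hq hr; have [h1 h2 h3 h4 [h5 h6]] := qfacts hq hr.
rewrite /kap qint2 // (rhoE hq) add0n.
move: (q - q^-1) h1 => u hu; field.
by rewrite hq h6 hu oppr_eq0 expf_neq0 ?mulf_neq0.
Qed.

Lemma kap0g (F : fieldType) (q : F) : q != 0 -> qnot_root_of_unity q ->
  kap q 0 * (- (q - q^-1) * qint q 2 ^+ 2) = 1.
Proof.
move=> hq hr; have [h1 h2 h3 h4 [h5 h6]] := qfacts hq hr.
rewrite /kap add0n; have ht : qint q 2 != 0 by rewrite qint2.
move: (q - q^-1) h1 (qint q 2) ht => u hu t ht; field.
by rewrite hu ht.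
Qed.

Lemma main_ind (F : fieldType) (A : algType F) (q : F) (W : int -> A) (G Gt : nat -> A) :
  q != 0 -> qnot_root_of_unity q -> Oq_relations q W G Gt -> forall n : nat,
  W n.+1%:Z = \sum_(0 <= k < n.+1) Xp q W k * Gc q G (n - k) /\
  W (- n%:Z) = \sum_(0 <= k < n.+1) Xm q W k * Gc q G (n - k).
Proof.
move=> hq hr H; have hrho := rho_neq0 hq hr.
elim=> [|n [Hp Hm]].
  rewrite !big_nat1 /= /Xp /Xm !Sfun0 /= -!scalerAl !mulr_algr !scalerA kap0g // !scale1r.
  by split.
split.
- have e := Rp hq hr H n.
  have e' : W n.+2%:Z = W (- n%:Z) + (rho q)^-1 *:
      ((q - q^-1) *: (W 1 * G n.+1) - q ^+ 2 *: comm (Bdelta q W) (W n.+1%:Z)).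
    by rewrite -e scalerA mulVf // scale1r addrC subrK.
  rewrite e' big_nat_recl // subn0 /=.
  under eq_bigr do rewrite subSS (@CX2 _ _ q W _ hq hr) mulrDl mulNr.
  rewrite sumrB -Hm.
  rewrite (eq_bigr (fun i => ((rho q)^-1 * q ^+ 2) *:
     (comm (Bdelta q W) (Xp q W i) * Gc q G (n - i)))); last by move=> i _; rewrite scalerAl.
  rewrite -scaler_sumr -(commBd_sum hq hr H (@Xp_kill _ _ q W)) -Hp.
  rewrite /Xp Sfun0 /= -scalerAl kap0E //.
  by rewrite scalerDr scalerN !scalerA addrCA.
- have e := Rm hq hr H n.
  have e' : W (- n.+1%:Z) = W n.+1%:Z + (rho q)^-1 *:
      ((q - q^-1) *: (W 0 * G n.+1) + comm (Bdelta q W) (W (- n%:Z))).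
    by rewrite -e scalerA mulVf // scale1r addrC subrK.
  rewrite e' big_nat_recl // subn0 /=.
  under eq_bigr do rewrite subSS (@CX1 _ _ q W _ hq hr) mulrDl.
  rewrite big_split /= -Hp.
  rewrite (eq_bigr (fun i => (rho q)^-1 *:
     (comm (Bdelta q W) (Xm q W i) * Gc q G (n - i)))); last by move=> i _; rewrite scalerAl.
  rewrite -scaler_sumr -(commBd_sum hq hr H (@Xm_kill _ _ q W)) -Hm.
  rewrite /Xm Sfun0 /= -scalerAl kap0E //.
  rewrite scalerDr !scalerA.
  by rewrite addrCA.
Qed.

Unset Implicit Arguments.

Theorem proposition12p3 (F : fieldType) (A : algType F) (q : F)
  (W : int -> A) (G Gt : nat -> A) :
  q != 0 -> qnot_root_of_unity q -> Oq_relations q W G Gt ->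
  forall n : nat,
    W n.+1%:Z =
      - (q - q^-1)^-1 *:
        \sum_(0 <= k < n.+1) \sum_(0 <= l < k.+1)
          ('C(k, l)%:R * q ^ (k%:Z - 2 * l%:Z) * (qint q 2 ^+ (k + 2))^-1)
            *: (Bt0 q W (k%:Z - 2 * l%:Z) * Gc q G (n - k))
    /\
    W (- n%:Z) =
      - (q - q^-1)^-1 *:
        \sum_(0 <= k < n.+1) \sum_(0 <= l < k.+1)
          ('C(k, l)%:R * q ^ (2 * l%:Z - k%:Z) * (qint q 2 ^+ (k + 2))^-1)
            *: (Bt1 q W (k%:Z - 2 * l%:Z) * Gc q G (n - k)).
Proof.
move=> hq hr H n; have [Hp Hm] := main_ind hq hr H n.
split.
- rewrite Hp scaler_sumr; apply: eq_bigr => k _.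
  rewrite /Xp /Sfun -scalerAl mulr_suml scaler_sumr scaler_sumr; apply: eq_bigr => l _.
  rewrite addr0 -scalerAl !scalerA; congr (_ *: _); rewrite /kap; ring.
- rewrite Hm scaler_sumr; apply: eq_bigr => k _.
  rewrite /Xm /Sfun -scalerAl mulr_suml scaler_sumr scaler_sumr.
  rewrite big_nat_rev /=; apply: eq_big_nat => l /andP [_ hl].
  rewrite add0n subSS -scalerAl !scalerA Bt1E bin_sub //.
  have -> : (k%:Z - 2 * (k - l)%N%:Z) = 2 * l%:Z - k%:Z by lia.
  have -> : (- (k%:Z - 2 * l%:Z) - 1) = 2 * l%:Z - k%:Z - 1 by lia.
  congr (_ *: _); rewrite /kap; ring.
Qed.
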